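(* Suppose the conditional gradient algorithm chooses $\theta_k$ by the exact line search $\theta_k\in\arg\min_{\theta\in[0,1]}\{(1-\theta)\mathrm{gap}(x_k,g_k)+\mathcal D(x_k,s_k,\theta)\}$, and $q>1$, $r\in[0,1]$ are such that $(\mathcal D,\mathrm{gap},\mathrm{subopt})$ satisfies the $(q,r)$ weak growth property with some finite $M>0$. Then for $k=0,1,\dots$ \[ \mathrm{subopt}_{k+1}\le\mathrm{subopt}_k\Big(1-\tfrac{q-1}{q}\min\Big\{1,\Big(\tfrac{\mathrm{subopt}_k^{1-r}}{M}\Big)^{\frac1{q-1}}\Big\}\Big). \] If $r=1$ then $\mathrm{subopt}_k\le\mathrm{subopt}_0\big(1-\frac{q-1}{q}\min\{1,M^{-1/(q-1)}\}\big)^k$. If $r\in[0,1)$ then $\mathrm{subopt}_k\le\mathrm{subopt}_0(1-\frac{q-1}{q})^k$ for $k=0,\dots,k_0$, where $k_0$ is the smallest $k$ with $\mathrm{subopt}_k^{1-r}\le M$, and for $k\ge k_0$ \[ \mathrm{subopt}_k\le\Big(\mathrm{subopt}_{k_0}^{\frac{r-1}{q-1}}+\frac{1-r}{q}\cdot\frac{1}{M^{\frac1{q-1}}}(k-k_0)\Big)^{\frac{q-1}{r-1}}. \]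
   Context: Let $f,\Psi:\mathbb{R}^n\to\mathbb{R}\cup\{\infty\}$ be closed proper convex functions such that (A1) $f$ is differentiable on $\mathrm{dom}(\Psi)$, and (A2) for every $x\in\mathrm{dom}(f)$ the set $\arg\min_s\{\langle\nabla f(x),s\rangle+\Psi(s)\}$ is nonempty. $f^*,\Psi^*$ denote convex conjugates; $\arg\min_y\{\langle g,y\rangle+\Psi(y)\}=\partial\Psi^*(-g)$. $D_f(y,x)=f(y)-f(x)-\langle\nabla f(x),y-x\rangle$. $\mathrm{gap}(x,u)=f(x)+\Psi(x)+f^*(u)+\Psi^*(-u)$. $\mathcal{D}(x,s,\theta)=D_f(x+\theta(s-x),x)+\Psi(x+\theta(s-x))-(1-\theta)\Psi(x)-\theta\Psi(s)$. Suboptimality gap: $\mathrm{subopt}(x)=f(x)+\Psi(x)-\min_y\{f(y)+\Psi(y)\}$ for $x\in\mathrm{dom}(\Psi)$ (the minimum assumed attained/finite). Conditional gradient algorithm: given $x_0\in\mathrm{dom}(\Psi)$, for $k=0,1,2,\dots$ let $g_k=\nabla f(x_k)$, pick $s_k\in\arg\min_y\{\langle g_k,y\rangle+\Psi(y)\}$ and $\theta_k\in[0,1]$, and set $x_{k+1}=(1-\theta_k)x_k+\theta_k s_k$. $\mathrm{subopt}_k=\mathrm{subopt}(x_k)$. $(q,r)$ weak growth property ($q>1$, $r\in[0,1]$): there is a finite $M>0$ such that for all $x\in\mathrm{dom}(\Psi)$, $g=\nabla f(x)$, $s\in\partial\Psi^*(-g)$: $\mathcal D(x,s,\theta)\,\mathrm{subopt}(x)^{1-r}\le\frac{M\theta^q}{q}\mathrm{gap}(x,g)$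 for all $\theta\in[0,1]$. *)

(* Defs.v *)
From HB Require Import structures.
From mathcomp Require Import all_boot all_order all_algebra.
From mathcomp Require Import all_classical all_reals all_analysis.
Set Implicit Arguments. Unset Strict Implicit. Unset Printing Implicit Defensive.
Import Order.TTheory GRing.Theory Num.Theory.
Import numFieldNormedType.Exports.
Local Open Scope classical_set_scope.
Local Open Scope ring_scope.

Section Defs.
Variables (R : realType) (n : nat).
Local Notation vec := 'rV[R]_n.

Definition dot (u v : vec) : R := \sum_(i < n) u 0 i * v 0 i.

Definition dom (h : vec -> \bar R) (x : vec) : Prop := (h x < +oo)%E.

Definition proper_fun (h : vec -> \bar R) : Prop :=
  (forall x, h x != -oo%E) /\ (exists x, dom h x).

Definition convex_fun (h : vec -> \bar R) : Prop :=
  forall (x y : vec) (t : R), 0 < t < 1 ->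
    (h ((1 - t) *: x + t *: y)%R <= (1 - t)%:E * h x + t%:E * h y)%E.

(* closed = lower semicontinuous *)
Definition lsc (h : vec -> \bar R) : Prop :=
  forall (x : vec) (a : R), (a%:E < h x)%E ->
    exists2 d : R, 0 < d & forall y : vec, `|y - x| < d -> (a%:E < h y)%E.

Definition closed_proper_convex (h : vec -> \bar R) : Prop :=
  [/\ lsc h, proper_fun h & convex_fun h].

Definition is_grad (h : vec -> \bar R) (x g : vec) : Prop :=
  h x \is a fin_num /\
  forall eps : R, 0 < eps -> exists2 d : R, 0 < d &
    forall y : vec, `|y - x| < d ->
      h y \is a fin_num /\
      `|fine (h y) - fine (h x) - dot g (y - x)| <= eps * `|y - x|.

Definition conj (h : vec -> \bar R) (u : vec) : \bar R :=
  ereal_sup (range (fun x => ((dot u x)%:E - h x)%E)).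

Definition subdiff (h : vec -> \bar R) (v s : vec) : Prop :=
  h v \is a fin_num /\ forall w, (h v + (dot s (w - v))%:E <= h w)%E.

Definition is_argmin_lin (Psi : vec -> \bar R) (g s : vec) : Prop :=
  forall y, ((dot g s)%:E + Psi s <= (dot g y)%:E + Psi y)%E.

Definition bregman (f : vec -> \bar R) (gradf : vec -> vec) (y x : vec) : \bar R :=
  (f y - f x - (dot (gradf x) (y - x))%:E)%E.

Definition gap (f Psi : vec -> \bar R) (x u : vec) : \bar R :=
  (f x + Psi x + conj f u + conj Psi (- u))%E.

Definition Dcal (f Psi : vec -> \bar R) (gradf : vec -> vec) (x s : vec) (t : R)
  : \bar R :=
  let y := x + t *: (s - x) in
  (bregman f gradf y x + Psi y - (1 - t)%:E * Psi x - t%:E * Psi s)%E.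

(* suboptimality gap, opt = min (f + Psi); real-valued on dom Psi *)
Definition subopt (f Psi : vec -> \bar R) (opt : R) (x : vec) : R :=
  fine (f x + Psi x)%E - opt.

Definition weak_growth (f Psi : vec -> \bar R) (gradf : vec -> vec) (opt : R)
  (q r M : R) : Prop :=
  forall (x s : vec) (t : R), dom Psi x -> subdiff (conj Psi) (- gradf x) s ->
    0 <= t <= 1 ->
    (Dcal f Psi gradf x s t * ((subopt f Psi opt x) `^ (1 - r))%:E
      <= (M * t `^ q / q)%:E * gap f Psi x (gradf x))%E.

End Defs.

(* Main.v *)
Require Import Defs.
From HB Require Import structures.
From mathcomp Require Import all_boot all_order all_algebra.
From mathcomp Require Import all_classical all_reals all_analysis.
From mathcomp.algebra_tactics Require Import ring lra.
Import Order.TTheory GRing.Theory Num.Theory.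
Import numFieldNormedType.Exports.
Local Open Scope classical_set_scope.
Local Open Scope ring_scope.

Lemma stepA (R : realType) (q r M S S' G : R) (D : R -> R) :
 1 < q -> 0 <= r <= 1 -> 0 < M -> 0 <= S -> S <= G -> S' <= S ->
 (forall t, 0 <= t <= 1 -> S' <= S + D t - t * G) ->
 (forall t, 0 <= t <= 1 -> D t * S `^ (1 - r) <= M * t `^ q / q * G) ->
 S' <= S * (1 - (q - 1) / q * Num.min 1 ((S `^ (1 - r) / M) `^ (1 / (q - 1)))).
Proof.
move=> q1 /andP[r0 r1] M0 S0 SG S'S hstep hwg.
have q0 : 0 < q by lra.
have e0 : 0 < 1 / (q - 1) by apply: divr_gt0; lra.
set P := S `^ (1 - r).
have [P0|P0] := eqVneq P 0.
  rewrite P0 mul0r powR0 ?gt_eqF //.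
  have -> : Num.min 1 0 = 0 :> R by rewrite /Num.min; case: ifP => //; lra.
  by rewrite mulr0 subr0 mulr1.
have Pp : 0 < P by rewrite lt_neqAle eq_sym P0 powR_ge0.
set C := (P / M) `^ (1 / (q - 1)).
have C0 : 0 < C by apply: powR_gt0; apply: divr_gt0.
set t := Num.min 1 C.
have tC : t <= C by rewrite /t ge_min lexx orbT.
have t1 : t <= 1 by rewrite /t ge_min lexx.
have t0 : 0 < t by rewrite /t lt_min C0 andbT.
have tq : M * t `^ q <= P * t.
  rewrite -(mulr_powRB1 (ltW t0) q0).
  have : t `^ (q - 1) <= C `^ (q - 1).
    by apply: ge0_ler_powR; rewrite ?nnegrE; lra.
  rewrite /C -powRrM mul1r mulVf ?gt_eqF ?subr_gt0 // powRr1; last first.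
    by apply: divr_ge0; apply: ltW.
  move=> h.
  have -> : P * t = M * (t * (P / M)) by field; rewrite gt_eqF.
  by rewrite ler_pM2l // ler_pM2l.
have t01 : 0 <= t <= 1 by rewrite (ltW t0) t1.
have Dt : D t <= t * G / q.
  have h := hwg t t01.
  have G0 : 0 <= G by lra.
  have : D t * P <= (t * G / q) * P.
    apply: (le_trans h).
    have -> : M * t `^ q / q * G = (M * t `^ q) * (G / q) by ring.
    have -> : t * G / q * P = (P * t) * (G / q) by ring.
    by rewrite ler_wpM2r // divr_ge0 // ltW.
  by rewrite ler_pM2r.
have := hstep t t01.
set w := (q - 1) / q.
have e : t * G / q = t * G - t * G * w by rewrite /w; field; rewrite gt_eqF.
have w0 : 0 <= w by rewrite /w divr_ge0 //; lra.
have h2 : t * S * w <= t * G * w.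
  by rewrite ler_wpM2r // ler_wpM2l // ltW.
move: Dt; rewrite e => Dt hs.
have -> : S * (1 - w * t) = S - t * S * w by ring.
lra.
Qed.

Section B.
Variable R : realType.
Implicit Types a p q x y : R.

Lemma powRE x p : 0 < x -> x `^ p = expR (p * ln x).
Proof. by move=> x0; rewrite /powR gt_eqF. Qed.

Lemma powR_anti x y p : 0 < x -> x <= y -> p <= 0 -> y `^ p <= x `^ p.
Proof.
move=> x0 xy p0; have y0 : 0 < y by apply: lt_le_trans x0 xy.
rewrite !powRE // ler_expR ler_wnM2l // ler_ln //.
Qed.

Lemma powR_ge1 x p : 1 <= x -> 0 <= p -> 1 <= x `^ p.
Proof.
move=> x1 p0; rewrite powRE; last lra.
apply: le_trans (expR_ge1Dx _); rewrite lerDl mulr_ge0 // ln_ge0 //.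
Qed.

Lemma powR_le1 x p : 0 <= x <= 1 -> 0 <= p -> x `^ p <= 1.
Proof.
move=> /andP[x0 x1] p0.
have h := @ge0_ler_powR R p p0 x 1.
have e : (1:R) `^ p = 1 by rewrite powR1.
rewrite -[X in _ <= X]e; apply: h => //; rewrite nnegrE //.
Qed.

Lemma bernoulli_q q k : 1 < q -> 1 + k%:R * (q - 1) <= q ^+ k.
Proof.
move=> q1; elim: k => [|k IH]; first by rewrite expr0 mul0r addr0.
rewrite exprS -natr1.
have h : 0 <= k%:R * (q - 1) * (q - 1) :> R.
  by rewrite !mulr_ge0 // subr_ge0 ltW.
have : q * (1 + k%:R * (q - 1)) <= q * q ^+ k by rewrite ler_pM2l //; lra.
have -> : q * (1 + k%:R * (q - 1)) = 1 + (k%:R + 1) * (q - 1) + k%:R * (q - 1) * (q - 1) by ring.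
lra.
Qed.


Lemma stepC (q r M S S' : R) : 1 < q -> r < 1 -> 0 < M -> 0 < S -> 0 < S' ->
  S `^ (1 - r) <= M ->
  S' <= S * (1 - (q - 1) / q * Num.min 1 ((S `^ (1 - r) / M) `^ (1 / (q - 1)))) ->
  S `^ ((r - 1) / (q - 1)) + (1 - r) / q * (M `^ (1 / (q - 1)))^-1
    <= S' `^ ((r - 1) / (q - 1)).
Proof.
move=> q1 r1 M0 S0 S'0 SM hS.
have q10 : q - 1 != 0 by rewrite subr_eq0 gt_eqF.
set e := 1 / (q - 1).
set e1 := (r - 1) / (q - 1).
have e0 : 0 < e by rewrite /e divr_gt0 //; lra.
have e1n : e1 < 0 by rewrite /e1 pmulr_llt0 ?invr_gt0 ?subr_gt0 ?subr_lt0.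
move: SM hS; rewrite !(powRE _ _ M0) !(powRE _ _ S0) !(powRE _ _ S'0).
rewrite -[X in _ <= X -> _](lnK (x:=M)) ?posrE // ler_expR => SM.
have c0 : 0 < expR ((1 - r) * ln S) / M by rewrite divr_gt0 // expR_gt0.
rewrite (powRE _ _ c0) ln_div ?posrE ?expR_gt0 // expRK.
set C := expR (e * ((1 - r) * ln S - ln M)).
have C1 : C <= 1.
  rewrite /C -[X in _ <= X]expR0 ler_expR pmulr_rle0 //; lra.
have -> : Num.min 1 C = C by rewrite /Num.min; case: ifP => //; rewrite lt_leAnge C1 andbF.
set y := (q - 1) / q * C.
move=> hS.
have y1 : 0 < 1 - y.
  rewrite -(pmulr_rgt0 _ S0); exact: lt_le_trans hS.
have lnS' : ln S' <= ln S - y.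
  have h : ln S' <= ln (S * (1 - y)) by rewrite ler_ln ?posrE // mulr_gt0.
  rewrite lnM ?posrE // in h.
  apply: le_trans h _; rewrite lerD2l.
  have := @le_ln1Dx R (- y); rewrite -[1 - y]/(1 + - y).
  apply; lra.
have h2 : e1 * ln S - e1 * y <= e1 * ln S'.
  rewrite -mulrBr ler_wnM2l //; exact: ltW.
apply: le_trans (_ : expR (e1 * ln S) * (1 - e1 * y) <= _).
  rewrite mulrBr mulr1 lerD2l.
  suff -> : - (expR (e1 * ln S) * (e1 * y)) = (1 - r) / q * (expR (e * ln M))^-1 by [].
  rewrite /y /C -expRN.
  have -> : - (expR (e1 * ln S) * (e1 * ((q - 1) / q * expR (e * ((1 - r) * ln S - ln M)))))
     = (1 - r) / q * (expR (e1 * ln S) * expR (e * ((1 - r) * ln S - ln M))).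
    rewrite /e1; field; rewrite ?gt_eqF //; lra.
  rewrite -expRD; congr (_ * expR _).
  rewrite /e1 /e; field; done.
apply: le_trans (_ : expR (e1 * ln S - e1 * y) <= _); last by rewrite ler_expR.
rewrite [X in _ <= X]expRD ler_pM2l ?expR_gt0 //.
have := expR_ge1Dx (- (e1 * y)); lra.
Qed.


Lemma seqB (q r M : R) (u : nat -> R) :
 1 < q -> 0 <= r <= 1 -> 0 < M -> (forall k, 0 <= u k) ->
 (forall k, u k.+1 <= u k * (1 - (q - 1) / q *
       Num.min 1 ((u k `^ (1 - r) / M) `^ (1 / (q - 1))))) ->
  (r = 1 -> forall k, u k <= u 0%N * (1 - (q - 1) / q *
       Num.min 1 (M `^ (1 / (q - 1)))^-1) ^+ k) /\
  (r < 1 -> exists k0 : nat,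
     [/\ u k0 `^ (1 - r) <= M,
         (forall k, (k < k0)%N -> M < u k `^ (1 - r)),
         (forall k, (k <= k0)%N -> u k <= u 0%N * (1 - (q - 1) / q) ^+ k) &
         (forall k, (k0 <= k)%N ->
            u k <= (u k0 `^ ((r - 1) / (q - 1))
                      + (1 - r) / q * (M `^ (1 / (q - 1)))^-1 * (k - k0)%:R)
                     `^ ((q - 1) / (r - 1)))]).
Proof.
move=> q1 /andP[r0 r1] M0 u0 hu.
have q0 : 0 < q by lra.
have w0 : 0 <= (q - 1) / q by rewrite divr_ge0 //; lra.
have w1 : (q - 1) / q <= 1 by rewrite ler_pdivrMr //; lra.
have fac : forall m : R, 0 <= m <= 1 -> 0 <= 1 - (q - 1) / q * m <= 1.
  move=> m /andP[m0 m1]; apply/andP; split.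
    rewrite subr_ge0; apply: le_trans w1; rewrite ler_piMr //.
  by rewrite lerBlDr lerDl mulr_ge0.
have minI : forall c : R, 0 <= c -> 0 <= Num.min 1 c <= 1.
  move=> c c0; rewrite ge_min lexx /= andbT le_min c0 andbT //.
have mono : forall k, u k.+1 <= u k.
  move=> k; apply: le_trans (hu k) _; apply: ler_piMr => //.
  by have /andP[] := fac _ (minI _ (powR_ge0 (u k `^ (1 - r) / M) (1 / (q - 1)))).
split.
  move=> r_1; subst r.
  rewrite subrr in hu.
  have eM : (1 / M) `^ (1 / (q - 1)) = (M `^ (1 / (q - 1)))^-1.
    rewrite !powRE ?divr_gt0 // -expRN ln_div ?posrE // ln1 sub0r mulrN //.
  set m := Num.min 1 (M `^ (1 / (q - 1)))^-1.
  have m01 : 0 <= m <= 1 by apply: minI; rewrite invr_ge0 powR_ge0.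
  have [f0 f1] := andP (fac _ m01).
  elim=> [|k IH]; first by rewrite expr0 mulr1.
  have step : u k.+1 <= u k * (1 - (q - 1) / q * m).
    have [uk0|uk0] := eqVneq (u k) 0.
      by rewrite uk0 mul0r -uk0 mono.
    by move: (hu k); rewrite powRr0 eM.
  apply: le_trans step _; rewrite exprSr mulrA ler_wpM2r //.
move=> rlt1.
have a0 : 0 < 1 - r by lra.
have rho : 1 - (q - 1) / q = q^-1 by field; rewrite gt_eqF.
have rho0 : 0 <= 1 - (q - 1) / q by rewrite rho invr_ge0 ltW.
have big : forall k, M < u k `^ (1 - r) -> u k.+1 <= u k * (1 - (q - 1) / q).
  move=> k h; have c1 : 1 <= u k `^ (1 - r) / M by rewrite ler_pdivlMr // mul1r ltW.
  have := hu k; rewrite min_l ?mulr1 //; apply: powR_ge1 => //.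
  by rewrite divr_ge0 // subr_ge0 ltW.
have geom : forall K, (forall k, (k < K)%N -> M < u k `^ (1 - r)) ->
    forall k, (k <= K)%N -> u k <= u 0%N * (1 - (q - 1) / q) ^+ k.
  move=> K hK; elim=> [|k IH] hk; first by rewrite expr0 mulr1.
  apply: le_trans (big k (hK k hk)) _.
  by rewrite exprSr mulrA ler_wpM2r // IH // ltnW.
have ex : exists k, u k `^ (1 - r) <= M.
  have [//|nex] := pselect (exists k, u k `^ (1 - r) <= M).
  exfalso.
  have allM : forall k, M < u k `^ (1 - r).
    move=> j; rewrite ltNge; apply/negP => h; apply: nex; by exists j.
  set eps := M `^ (1 - r)^-1.
  have eps0 : 0 < eps by apply: powR_gt0.
  have q10 : 0 < q - 1 by lra.
  have e0 : 0 <= u 0%N / (eps * (q - 1)) by rewrite divr_ge0 // mulr_ge0 // ltW.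
  set NN := Num.bound (u 0%N / (eps * (q - 1))).
  have hbd := archi_boundP e0; rewrite -/NN ltr_pdivrMr ?mulr_gt0 // in hbd.
  have uK := geom NN (fun k _ => allM k) NN (leqnn NN).
  have qK0 : 0 < q ^+ NN by rewrite exprn_gt0.
  have bq := bernoulli_q _ NN q1.
  have uKe : u NN < eps.
    apply: le_lt_trans uK _; rewrite rho exprVn -/(_ / _) ltr_pdivrMr //.
    apply: lt_le_trans (_ : eps * (1 + NN%:R * (q - 1)) <= _); last by rewrite ler_pM2l.
    rewrite mulrDr mulr1 mulrCA.
    by apply: (lt_le_trans hbd); rewrite lerDr ltW.
  have := gt0_ltr_powR a0 (u0 NN) (ltW eps0) uKe.
  rewrite /eps -powRrM mulVf ?gt_eqF // powRr1 ?ltW // => h.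
  by have := allM NN; rewrite ltNge (ltW h).
have [k0 Pk0 mink0] := find_ex_minn ex.
have before : forall k, (k < k0)%N -> M < u k `^ (1 - r).
  move=> k hk; rewrite ltNge; apply/negP => h.
  by have := mink0 k h; rewrite leqNgt hk.
exists k0; split => //.
  by move=> k hk; apply: geom before k hk.
have monoL : forall i j, (i <= j)%N -> u j <= u i.
  move=> i j /subnK <-; elim: (j - i)%N => [|d IH] //=.
  by rewrite addSn; apply: le_trans (mono _) IH.
set b := (1 - r) / q * (M `^ (1 / (q - 1)))^-1.
have b0 : 0 <= b.
  by rewrite /b mulr_ge0 // ?divr_ge0 ?invr_ge0 ?powR_ge0 //; try lra.
have claim : forall d, 0 < u (k0 + d)%N ->
    u k0 `^ ((r - 1) / (q - 1)) + b * d%:R <= u (k0 + d)%N `^ ((r - 1) / (q - 1)).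
  elim=> [|d IH] h; first by rewrite addn0 mulr0 addr0.
  rewrite addnS in h *.
  have hd : 0 < u (k0 + d)%N by apply: lt_le_trans h (mono _).
  have hM : u (k0 + d)%N `^ (1 - r) <= M.
    apply: le_trans Pk0.
    apply: ge0_ler_powR; rewrite ?nnegrE ?u0 //; first exact: ltW.
    by apply: monoL; rewrite leq_addr.
  have st := @stepC _ _ _ _ _ q1 rlt1 M0 hd h hM (hu _).
  apply: le_trans st; rewrite -natr1 mulrDr mulr1 addrA lerD2r; exact: IH.
move=> k hk.
have [uk0|ukp] := eqVneq (u k) 0; first by rewrite uk0 powR_ge0.
have ukp' : 0 < u k by rewrite lt_neqAle eq_sym ukp u0.
have uk0p : 0 < u k0 by apply: lt_le_trans ukp' (monoL _ _ hk).
have ek : k = (k0 + (k - k0))%N by rewrite subnKC.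
have W := claim (k - k0)%N; rewrite -ek in W; have {}W := W ukp'.
have Z0 : 0 < u k0 `^ ((r - 1) / (q - 1)) + b * (k - k0)%:R.
  have p1 := powR_gt0 ((r - 1) / (q - 1)) uk0p.
  have p2 : 0 <= b * (k - k0)%:R by rewrite mulr_ge0.
  lra.
have e12 : (r - 1) / (q - 1) * ((q - 1) / (r - 1)) = 1.
  have h1 : q - 1 != 0 by rewrite subr_eq0 gt_eqF.
  have h2 : r - 1 != 0 by rewrite subr_eq0 lt_eqF.
  by rewrite mulf_div [(r - 1) * _]mulrC divff // mulf_neq0.
rewrite -[X in X <= _](powRr1 (ltW ukp')) -{1}e12 powRrM.
apply: powR_anti => //.
rewrite pmulr_rle0 ?subr_gt0 // ?invr_le0 ?subr_le0 ?ltW //.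
Qed.

End B.

Section Dot.
Variables (R : realType) (n : nat).
Implicit Types u v w : 'rV[R]_n.

Lemma dotC u v : dot u v = dot v u.
Proof. by rewrite /dot; apply: eq_bigr => i _; rewrite mulrC. Qed.

Lemma dotDr u v w : dot u (v + w) = dot u v + dot u w.
Proof. by rewrite /dot -big_split /=; apply: eq_bigr => i _; rewrite !mxE mulrDr. Qed.

Lemma dotNr u v : dot u (- v) = - dot u v.
Proof. by rewrite /dot -sumrN; apply: eq_bigr => i _; rewrite !mxE mulrN. Qed.

Lemma dotBr u v w : dot u (v - w) = dot u v - dot u w.
Proof. by rewrite dotDr dotNr. Qed.

Lemma dotNl u v : dot (- u) v = - dot u v.
Proof. by rewrite dotC dotNr dotC. Qed.

Lemma dotZr u (a : R) v : dot u (a *: v) = a * dot u v.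
Proof. by rewrite /dot mulr_sumr; apply: eq_bigr => i _; rewrite !mxE mulrCA. Qed.

Lemma dot0r u : dot u 0 = 0.
Proof. by rewrite /dot big1 // => i _; rewrite mxE mulr0. Qed.

End Dot.

Section Main.
Variables (R : realType) (n : nat).
Variables (f Psi : 'rV[R]_n -> \bar R) (gradf : 'rV[R]_n -> 'rV[R]_n).
Variables (opt q r M : R).
Hypotheses (hf : closed_proper_convex f) (hP : closed_proper_convex Psi).
Hypothesis A1 : forall y, dom Psi y -> is_grad f y (gradf y).
Hypothesis hopt1 : exists xs, (f xs + Psi xs)%E = opt%:E.
Hypothesis hopt2 : forall y, (opt%:E <= f y + Psi y)%E.

Lemma Psi_nNy y : Psi y != -oo%E.
Proof. by case: hP => _ [h _] _; apply: h. Qed.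

Lemma f_nNy y : f y != -oo%E.
Proof. by case: hf => _ [h _] _; apply: h. Qed.

Lemma dom_fin {y} : dom Psi y -> exists p, Psi y = p%:E.
Proof.
move=> hy; case E: (Psi y) => [p||]; first by exists p.
  by move: hy; rewrite /dom E.
by have := Psi_nNy y; rewrite E.
Qed.

Lemma dom_ffin {y} : dom Psi y -> exists p, f y = p%:E.
Proof.
move=> /A1 [h _]; exists (fine (f y)); by rewrite fineK.
Qed.

Lemma argmin_dom {g S} : is_argmin_lin Psi g S -> dom Psi S.
Proof.
move=> hS; case: hP => _ [_ [y0 hy0]] _.
have [p0 hp0] := dom_fin hy0.
have := hS y0; rewrite hp0.
rewrite /dom; case E: (Psi S) => [p||] h; first exact: ltry.
  by move: h; rewrite addey // leye_eq -EFinD.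
by have := Psi_nNy S; rewrite E.
Qed.

Lemma dom_conv X S t : dom Psi X -> dom Psi S -> 0 <= t <= 1 ->
  dom Psi ((1 - t) *: X + t *: S).
Proof.
move=> hX hS /andP[t0 t1].
have [->|tn0] := eqVneq t 0; first by rewrite subr0 scale1r scale0r addr0.
have [->|tn1] := eqVneq t 1; first by rewrite subrr scale0r add0r scale1r.
have [pX hpX] := dom_fin hX; have [pS hpS] := dom_fin hS.
case: hP => _ _ cv.
have := cv X S t; rewrite hpX hpS -!EFinM -EFinD => h.
rewrite /dom; apply: le_lt_trans (h _) _; last exact: ltry.
by rewrite !lt_neqAle t0 t1 eq_sym tn0 tn1.
Qed.


Lemma subgrad X y : dom Psi X ->
  (f X + (dot (gradf X) (y - X))%:E <= f y)%E.
Proof.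
move=> hX; have [fX hfX] := dom_ffin hX.
have [hfin hfr] := A1 _ hX.
case Ey: (f y) => [fy||]; last first.
- by have := f_nNy y; rewrite Ey.
- exact: leey.
rewrite hfX -EFinD lee_fin.
set g := gradf X; set v := y - X.
have [v0|vn0] := eqVneq v 0.
  have yX : y = X by apply/eqP; rewrite -subr_eq0 -/v v0.
  rewrite v0 dot0r addr0; move: Ey; rewrite yX hfX => -[->] //.
have nv : 0 < `|v| by rewrite normr_gt0.
apply/ler_addgt0Pr => e e0.
have [d d0 hd] := hfr (e / `|v|) (divr_gt0 e0 nv).
set t := d / (2 * (d + `|v|)).
have dv0 : 0 < d + `|v| by rewrite addr_gt0.
have t0 : 0 < t by rewrite divr_gt0 // mulr_gt0.
have t1 : t < 1.
  by rewrite ltr_pdivrMr ?mulr_gt0 // mul1r; lra.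
set z := (1 - t) *: X + t *: y.
have ez : z - X = t *: v by apply/rowP => i; rewrite !mxE; ring.
have tv : t * `|v| < d.
  rewrite /t mulrAC ltr_pdivrMr ?mulr_gt0 //.
  have : 0 < d * `|v| by rewrite mulr_gt0.
  nra.
have hzX : `|z - X| < d by rewrite ez normrZ gtr0_norm.
have [hz hz2] := hd z hzX.
rewrite ez normrZ gtr0_norm // dotZr hfX /= in hz2.
have [fz hfz] : exists fz, f z = fz%:E by exists (fine (f z)); rewrite fineK.
rewrite hfz /= in hz2.
have t01 : 0 < t < 1 by rewrite t0 t1.
case: hf => _ _ cv.
have := cv X y t; rewrite hfz hfX Ey -!EFinM -EFinD lee_fin => /(_ t01).
move=> hcv.
have ee : e / `|v| * (t * `|v|) = t * e by field; rewrite gt_eqF.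
rewrite ee in hz2.
move/ler_normlP: hz2 => [h1 _].
have h2 : t * (fX + dot g v - e - fy) <= 0 by lra.
rewrite pmulr_rle0 // in h2; lra.
Qed.


Lemma conjf X : dom Psi X ->
  conj f (gradf X) = ((dot (gradf X) X)%:E - f X)%E.
Proof.
move=> hX; have [fX hfX] := dom_ffin hX.
apply/le_anti/andP; split; last by apply: ereal_sup_ubound; exists X.
apply: ub_ereal_sup => _ [y _ <-].
have := subgrad X y hX; rewrite hfX.
case Ey: (f y) => [fy||] h.
- rewrite -!EFinB lee_fin; rewrite -EFinD lee_fin dotBr in h; lra.
- by rewrite addeNy leNye.
- by have := f_nNy y; rewrite Ey.
Qed.

Lemma conjPsi X S : is_argmin_lin Psi (gradf X) S ->
  conj Psi (- gradf X) = ((dot (- gradf X) S)%:E - Psi S)%E.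
Proof.
move=> hS; have [pS hpS] := dom_fin (argmin_dom hS).
apply/le_anti/andP; split; last by apply: ereal_sup_ubound; exists S.
apply: ub_ereal_sup => _ [y _ <-].
have := hS y; rewrite hpS.
case Ey: (Psi y) => [py||] h.
- rewrite -!EFinB lee_fin !dotNl; rewrite -!EFinD lee_fin in h; lra.
- by rewrite addeNy leNye.
- by have := Psi_nNy y; rewrite Ey.
Qed.


Lemma onestep X S th :
  1 < q -> 0 <= r <= 1 -> 0 < M -> weak_growth f Psi gradf opt q r M ->
  dom Psi X -> is_argmin_lin Psi (gradf X) S -> 0 <= th <= 1 ->
  (forall t, 0 <= t <= 1 ->
     ((1 - th)%:E * gap f Psi X (gradf X) + Dcal f Psi gradf X S th
        <= (1 - t)%:E * gap f Psi X (gradf X) + Dcal f Psi gradf X S t)%E) ->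
  dom Psi ((1 - th) *: X + th *: S) /\
  subopt f Psi opt ((1 - th) *: X + th *: S) <= subopt f Psi opt X *
    (1 - (q - 1) / q * Num.min 1 ((subopt f Psi opt X `^ (1 - r) / M) `^ (1 / (q - 1)))).
Proof.
move=> q1 r01 M0 wg hX hS th01 hls.
have hSd := argmin_dom hS.
have [fX hfX] := dom_ffin hX; have [pX hpX] := dom_fin hX; have [pS hpS] := dom_fin hSd.
set g := gradf X.
set G := pX + dot g X - dot g S - pS.
have hG : gap f Psi X g = G%:E.
  rewrite /gap (conjf _ hX) (conjPsi _ _ hS) hfX hpX hpS dotNl.
  rewrite -!EFinB -!EFinD /G; congr EFin; ring.
have zE : forall t, (1 - t) *: X + t *: S = X + t *: (S - X).
  by move=> t; apply/rowP => i; rewrite !mxE; ring.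
have zdom : forall t, 0 <= t <= 1 -> dom Psi (X + t *: (S - X)).
  by move=> t ht; rewrite -zE; exact: dom_conv.
set Dr := fun t => fine (Dcal f Psi gradf X S t).
set sub := subopt f Psi opt.
have key : forall t, 0 <= t <= 1 -> Dcal f Psi gradf X S t = (Dr t)%:E /\
    Dr t - t * G = sub (X + t *: (S - X)) - sub X.
  move=> t ht; have hz := zdom t ht.
  have [fz hfz] := dom_ffin hz; have [pz hpz] := dom_fin hz.
  have eD : Dcal f Psi gradf X S t = (fz - fX - dot g (X + t *: (S - X) - X)
                + pz - (1 - t) * pX - t * pS)%:E.
    by rewrite /Dcal /bregman hfz hfX hpz hpX hpS.
  split; first by rewrite /Dr eD.
  rewrite /Dr eD /= /sub /subopt hfz hpz hfX hpX /=.
  have -> : X + t *: (S - X) - X = t *: (S - X) by rewrite [X + _]addrC addrK.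
  rewrite dotZr dotBr /G; ring.
have [eDth hth] := key th th01.
have hstep : forall t, 0 <= t <= 1 -> sub (X + th *: (S - X)) <= sub X + Dr t - t * G.
  move=> t ht; have [eDt htt] := key t ht.
  have := hls t ht; rewrite hG eDth eDt -!EFinM -!EFinD lee_fin => h.
  lra.
have hsub : subdiff (conj Psi) (- g) S.
  split; first by rewrite (conjPsi _ _ hS) hpS.
  move=> w; rewrite (conjPsi _ _ hS) hpS.
  apply: le_trans (_ : ((dot w S)%:E - pS%:E <= conj Psi w)%E); last first.
    by apply: ereal_sup_ubound; exists S => //; rewrite hpS.
  rewrite -EFinB -EFinD -EFinB lee_fin opprK dotDr dotNl (@dotC _ _ S w) (@dotC _ _ S g).
  lra.
have hwg : forall t, 0 <= t <= 1 -> Dr t * sub X `^ (1 - r) <= M * t `^ q / q * G.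
  move=> t ht; have [eDt _] := key t ht.
  by have := wg X S t hX hsub ht; rewrite eDt hG -!EFinM lee_fin.
have S0 : 0 <= sub X.
  by have := hopt2 X; rewrite /sub /subopt hfX hpX -EFinD lee_fin /=; lra.
have SG : sub X <= G.
  case: hopt1 => xs hxs.
  have := subgrad X xs hX; have := hS xs; rewrite -/g.
  case Ef: (f xs) hxs => [fxs||] hxs; last first.
  - by have := f_nNy xs; rewrite Ef.
  - by move: hxs; case: (Psi xs).
  case Ep: (Psi xs) hxs => [pxs||] hxs; last first.
  - by have := Psi_nNy xs; rewrite Ep.
  - by [].
  move: hxs => [hxs].
  rewrite hpS -!EFinD lee_fin => h1; rewrite hfX -EFinD lee_fin dotBr => h2.
  rewrite /sub /subopt hfX hpX /= /G; lra.
have S'S : sub (X + th *: (S - X)) <= sub X.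
  have h01 : 0 <= (0:R) <= 1 by rewrite lexx ler01.
  have := hstep 0 h01; have [_ h0] := key 0 h01.
  rewrite scale0r addr0 subrr in h0; lra.
split; first by rewrite zE; apply: zdom.
rewrite zE; exact: stepA q1 r01 M0 S0 SG S'S hstep hwg.
Qed.


Lemma sub_ge0 X : dom Psi X -> 0 <= subopt f Psi opt X.
Proof.
move=> hX; have [fX hfX] := dom_ffin hX; have [pX hpX] := dom_fin hX.
by have := hopt2 X; rewrite /subopt hfX hpX -EFinD lee_fin /=; lra.
Qed.

End Main.
Theorem theorem3 (R : realType) (n : nat) (f Psi : 'rV[R]_n -> \bar R)
  (gradf : 'rV[R]_n -> 'rV[R]_n) (opt q r M : R)
  (x s : nat -> 'rV[R]_n) (theta : nat -> R) :
  closed_proper_convex f -> closed_proper_convex Psi ->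
  (* (A1): f differentiable on dom Psi, with gradient gradf *)
  (forall y, dom Psi y -> is_grad f y (gradf y)) ->
  (* (A2) *)
  (forall y, dom Psi y -> exists s0, is_argmin_lin Psi (gradf y) s0) ->
  (* opt = min_y (f y + Psi y), attained and finite *)
  (exists xs, (f xs + Psi xs)%E = opt%:E) ->
  (forall y, (opt%:E <= f y + Psi y)%E) ->
  1 < q -> 0 <= r <= 1 -> 0 < M ->
  weak_growth f Psi gradf opt q r M ->
  (* conditional gradient algorithm with exact line search *)
  dom Psi (x 0%N) ->
  (forall k, is_argmin_lin Psi (gradf (x k)) (s k)) ->
  (forall k, 0 <= theta k <= 1 /\
     forall t, 0 <= t <= 1 ->
       ((1 - theta k)%:E * gap f Psi (x k) (gradf (x k))
          + Dcal f Psi gradf (x k) (s k) (theta k)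
        <= (1 - t)%:E * gap f Psi (x k) (gradf (x k))
          + Dcal f Psi gradf (x k) (s k) t)%E) ->
  (forall k, x k.+1 = (1 - theta k) *: x k + theta k *: s k) ->
  let sub k := subopt f Psi opt (x k) in
  (forall k, sub k.+1 <= sub k * (1 - (q - 1) / q *
       Num.min 1 ((sub k `^ (1 - r) / M) `^ (1 / (q - 1))))) /\
  (r = 1 -> forall k, sub k <= sub 0%N * (1 - (q - 1) / q *
       Num.min 1 (M `^ (1 / (q - 1)))^-1) ^+ k) /\
  (r < 1 -> exists k0 : nat,
     [/\ sub k0 `^ (1 - r) <= M,
         (forall k, (k < k0)%N -> M < sub k `^ (1 - r)),
         (forall k, (k <= k0)%N -> sub k <= sub 0%N * (1 - (q - 1) / q) ^+ k) &
         (forall k, (k0 <= k)%N ->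
            sub k <= (sub k0 `^ ((r - 1) / (q - 1))
                      + (1 - r) / q * (M `^ (1 / (q - 1)))^-1 * (k - k0)%:R)
                     `^ ((q - 1) / (r - 1)))]).
Proof.
move=> hf hP A1 A2 hopt1 hopt2 q1 r01 M0 wg hx0 hs hth hx sub.
have os : forall k, dom Psi (x k) -> _ := fun k hk =>
  @onestep R n f Psi gradf opt q r M hf hP A1 hopt1 hopt2 (x k) (s k) (theta k)
    q1 r01 M0 wg hk (hs k) (hth k).1 (hth k).2.
have domx : forall k, dom Psi (x k).
  elim=> [|k IH] //; rewrite hx; exact: (os k IH).1.
have rec : forall k, sub k.+1 <= sub k * (1 - (q - 1) / q *
       Num.min 1 ((sub k `^ (1 - r) / M) `^ (1 / (q - 1)))).
  move=> k; rewrite /sub hx; exact: (os k (domx k)).2.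
have nonneg : forall k, 0 <= sub k.
  by move=> k; rewrite /sub; apply: (@sub_ge0 R n f Psi gradf opt hP A1 hopt2).
split; first exact: rec.
exact: (@seqB R q r M sub q1 r01 M0 nonneg rec).
Qed.
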